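(* Let $q$ be a positive integer, $k\ge1$, $p_1,\dots,p_k\ge1$ integers and $s_i,a_{ij},\nu$ integers. Suppose $B(n)=\lceil n/q\rceil$ formally satisfies the recursion $R(n)=\sum_{i=1}^k R\big(n-s_i-\sum_{j=1}^{p_i}R(n-a_{ij})\big)+\nu$, i.e. $B(n)=\sum_{i=1}^k B\big(n-s_i-\sum_{j=1}^{p_i}B(n-a_{ij})\big)+\nu$ for all integers $n$. Then $B$ also formally satisfies the recursion $$R'(n)=\sum_{i=1}^k R'\Big(n-s_i-\sum_{j=1}^{p_i}R'(n-a_{ij})\Big)+R'\big(n-1-R'(n-1)-R'(n-2)-\cdots-R'(n-q)\big)+\nu,$$ i.e. $B(n)=\sum_{i=1}^k B\big(n-s_i-\sum_{j}B(n-a_{ij})\big)+B\big(n-1-\sum_{t=1}^q B(n-t)\big)+\nu$ for all integers $n$. *)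

(* Defs.v *)
From Stdlib Require Import ZArith List.
Open Scope Z_scope.

Definition ceil_div (q n : Z) : Z := (n + q - 1) / q.

Definition sum1 (m : nat) (f : nat -> Z) : Z :=
  fold_right Z.add 0 (map f (seq 1 m)).

Definition rec_rhs (R : Z -> Z) (k : nat) (p : nat -> nat) (s : nat -> Z)
  (a : nat -> nat -> Z) (nu : Z) (n : Z) : Z :=
  sum1 k (fun i => R (n - s i - sum1 (p i) (fun j => R (n - a i j)))) + nu.

(* Main.v *)
Require Import Defs.
From Stdlib Require Import ZArith List Lia.
Open Scope Z_scope.

Lemma sum1_S m h : sum1 (S m) h = sum1 m h + h (S m).
Proof.
  unfold sum1. rewrite seq_S, map_app, fold_right_app. simpl.
  replace (1 + m)%nat with (S m) by lia.
  induction (map h (seq 1 m)); simpl; lia.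
Qed.

Lemma tele q n m : sum1 m (fun t => ceil_div q (n + 1 - Z.of_nat t))
  = sum1 m (fun t => ceil_div q (n - Z.of_nat t)) + ceil_div q n - ceil_div q (n - Z.of_nat m).
Proof.
  induction m.
  - unfold sum1; simpl. replace (n - 0) with n by lia. lia.
  - rewrite !sum1_S, IHm.
    replace (n + 1 - Z.of_nat (S m)) with (n - Z.of_nat m) by lia. lia.
Qed.

Lemma step q n : 0 < q -> ceil_div q n - ceil_div q (n - q) = 1.
Proof.
  intro Hq. unfold ceil_div.
  replace (n + q - 1) with (n - q + q - 1 + 1 * q) by lia.
  rewrite Z.div_add by lia. lia.
Qed.

Lemma base q m : 0 < q -> (Z.of_nat m <= q) ->
  sum1 m (fun t => ceil_div q (1 - Z.of_nat t)) = 0.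
Proof.
  intros Hq. induction m; intro Hm.
  - reflexivity.
  - rewrite sum1_S, IHm by lia. unfold ceil_div.
    rewrite Z.div_small by lia. lia.
Qed.

Lemma key q : 0 < q -> forall n,
  sum1 (Z.to_nat q) (fun t => ceil_div q (n - Z.of_nat t)) = n - 1.
Proof.
  intros Hq n.
  replace n with (1 + (n - 1)) by lia.
  generalize (n - 1). clear n. intro z.
  induction z using Z.peano_ind.
  - replace (1 + 0) with 1 by lia. apply base; lia.
  - pose proof (tele q (1 + z) (Z.to_nat q)).
    rewrite Z2Nat.id in H by lia. pose proof (step q (1 + z) Hq).
    replace (1 + Z.succ z) with (1 + z + 1) by lia. lia.
  - pose proof (tele q (1 + Z.pred z) (Z.to_nat q)).
    rewrite Z2Nat.id in H by lia. pose proof (step q (1 + Z.pred z) Hq).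
    replace (1 + Z.pred z + 1) with (1 + z) in H by lia. lia.
Qed.

Theorem theorem5 (q : Z) (k : nat) (p : nat -> nat) (s : nat -> Z)
  (a : nat -> nat -> Z) (nu : Z) :
  0 < q ->
  (1 <= k)%nat ->
  (forall i, (1 <= i <= k)%nat -> (1 <= p i)%nat) ->
  (forall n : Z, ceil_div q n = rec_rhs (ceil_div q) k p s a nu n) ->
  forall n : Z,
    ceil_div q n =
      sum1 k (fun i => ceil_div q (n - s i - sum1 (p i) (fun j => ceil_div q (n - a i j))))
      + ceil_div q (n - 1 - sum1 (Z.to_nat q) (fun t => ceil_div q (n - Z.of_nat t)))
      + nu.
Proof.
  intros Hq _ _ H n.
  rewrite (key q Hq n).
  replace (n - 1 - (n - 1)) with 0 by lia.
  assert (ceil_div q 0 = 0) as E by (unfold ceil_div; apply Z.div_small; lia).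
  rewrite E, H. unfold rec_rhs. lia.
Qed.
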